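(* Assume $\Omega^*\neq\emptyset$, let $\sigma\in[0,c]$, and let an initial point $\omega_0$ be given. Then there exist parameters $(W_k,\theta_k,\beta_k)\in\mathcal{S}(\sigma,A)$, $k\ge0$, such that for the sequence $\{\omega_k\}$ generated by the iteration below, the quantity $\operatorname{dist}^2_{\mathcal{H}_k}(\omega_k,\Omega^* )$ decreases monotonically in $k$ for all sufficiently large $k$.
   Context: Let $A\in\mathbb{R}^{m\times d}$, $X\in\mathbb{R}^{m\times n}$, and let $f:\mathbb{R}^{d\times n}\to\mathbb{R}$, $g:\mathbb{R}^{m\times n}\to\mathbb{R}$ be convex. Consider the problem $\min_{Z,E} f(Z)+g(E)$ subject to $X=AZ+E$. Triples are written $\omega=(Z,E,-\lambda)$ with $\lambda\in\mathbb{R}^{m\times n}$ a Lagrange multiplier; the inner product of triples is the sum of componentwise Frobenius inner products. $\Omega^*$ is the solution set: the set of $\omega^*=(Z^*,E^*,-\lambda^* )$ with $0\in\partial f(Z^* )+A^\top\lambda^*$, $0\in\partial g(E^* )+\lambda^*$, $AZ^*+E^*=X$. $\circ$ is the Hadamard product; $\beta^{-1}$ is the entrywise reciprocal; $\tfrac{\theta}{2}\circ\|M\|_F^2:=\tfrac12\sum_{ij}\theta_{ij}M_{ij}^2$. Iteration (D-LADMM), with parameters $W_k\in\mathbb{R}^{m\times d}$, $\theta_k\in\mathbb{R}^{d\times n}$, $\beta_k\in\mathbb{R}^{m\times n}$: $Z_{k+1}=\arg\min_Z\{ f(Z)+\tfrac{\theta_k}{2}\circ\|Z-Z_k+\theta_k^{-1}\circ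 W_k^\top(\lambda_k+\beta_k\circ(AZ_k+E_k-X))\|_F^2\}$, $E_{k+1}=\arg\min_E\{g(E)+\tfrac{\beta_k}{2}\circ\|E-X+AZ_{k+1}+\beta_k^{-1}\circ\lambda_k\|_F^2\}$, $\lambda_{k+1}=\lambda_k+\beta_k\circ(AZ_{k+1}+E_{k+1}-X)$. $\mathcal{D}_k(Z)=\theta_k\circ Z-W_k^\top(\beta_k\circ(AZ))$; $\mathcal{H}_k(Z,E,-\lambda)=(\mathcal{D}_k(Z),\ \beta_k\circ E,\ \beta_k^{-1}\circ(-\lambda))$; $\|\omega\|_{\mathcal{H}}^2=\langle\omega,\mathcal{H}(\omega)\rangle$; $\operatorname{dist}^2_{\mathcal{H}}(\omega,\Omega^* )=\min_{\omega^*\in\Omega^*}\|\omega-\omega^*\|^2_{\mathcal{H}}$. $\mathcal{S}(\sigma,A)$ is the set of $(W,\theta,\beta)$ with $\|W-A\|\le\sigma$ (spectral norm), $\theta,\beta$ entrywise positive, and $Z\mapsto\theta\circ Z-W^\top(\beta\circ(AZ))$ positive definite ($\langle\cdot(Z),Z\rangle>0$ for $Z\neq0$). Standing assumption: there is a constant $c$ such that $\mathcal{S}(\sigma,A)\ne\emptyset$ for all $0\le\sigma\le c$. *)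

(* Defs.v *)
From HB Require Import structures.
From mathcomp Require Import all_boot all_order all_algebra.
From mathcomp Require Import classical_sets reals.
Set Implicit Arguments. Unset Strict Implicit. Unset Printing Implicit Defensive.
Import Order.TTheory GRing.Theory Num.Theory.
Local Open Scope ring_scope.
Local Open Scope classical_set_scope.

Section DLADMM.
Variable R : realType.

Definition frob {p q : nat} (M N : 'M[R]_(p, q)) : R :=
  \sum_(i < p) \sum_(j < q) M i j * N i j.

Definition hada {p q : nat} (M N : 'M[R]_(p, q)) : 'M[R]_(p, q) :=
  map2_mx (fun a b => a * b) M N.
Definition erecip {p q : nat} (M : 'M[R]_(p, q)) : 'M[R]_(p, q) :=
  map_mx (fun a => a^-1) M.

Definition wsqnorm {p q : nat} (theta M : 'M[R]_(p, q)) : R :=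
  2^-1 * \sum_(i < p) \sum_(j < q) theta i j * M i j ^+ 2.

Definition convex_fun {p q : nat} (f : 'M[R]_(p, q) -> R) : Prop :=
  forall (x y : 'M[R]_(p, q)) (t : R), 0 <= t -> t <= 1 ->
    f (t *: x + (1 - t) *: y) <= t * f x + (1 - t) * f y.

Definition subdiff {p q : nat} (f : 'M[R]_(p, q) -> R) (Z : 'M[R]_(p, q))
  : set 'M[R]_(p, q) :=
  [set G | forall Z', f Z + frob G (Z' - Z) <= f Z'].

Definition vnorm {p : nat} (x : 'cV[R]_p) : R := Num.sqrt (frob x x).
Definition specnorm {p q : nat} (M : 'M[R]_(p, q)) : R :=
  sup [set vnorm (M *m x) | x in [set x : 'cV[R]_q | vnorm x = 1]].

Definition mx_pos {p q : nat} (M : 'M[R]_(p, q)) : Prop :=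
  forall i j, 0 < M i j.

Definition Dop {m d n : nat} (A W : 'M[R]_(m, d)) (theta : 'M[R]_(d, n))
  (beta : 'M[R]_(m, n)) (Z : 'M[R]_(d, n)) : 'M[R]_(d, n) :=
  hada theta Z - W^T *m hada beta (A *m Z).

Definition Sset {m d n : nat} (sigma : R) (A : 'M[R]_(m, d))
  (W : 'M[R]_(m, d)) (theta : 'M[R]_(d, n)) (beta : 'M[R]_(m, n)) : Prop :=
  [/\ specnorm (W - A) <= sigma, mx_pos theta, mx_pos beta &
      forall Z : 'M[R]_(d, n), Z != 0 -> 0 < frob (Dop A W theta beta Z) Z].

(* triples omega = (Z, E, -lambda); the third component stores -lambda *)
Definition triple (m d n : nat) : Type :=
  ('M[R]_(d, n) * 'M[R]_(m, n) * 'M[R]_(m, n))%type.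

Definition mk_triple {m d n : nat} (Z : 'M[R]_(d, n)) (E lam : 'M[R]_(m, n))
  : triple m d n := (Z, E, - lam).

Definition trip_sub {m d n : nat} (u v : triple m d n) : triple m d n :=
  (u.1.1 - v.1.1, u.1.2 - v.1.2, u.2 - v.2).

Definition trip_inner {m d n : nat} (u v : triple m d n) : R :=
  frob u.1.1 v.1.1 + frob u.1.2 v.1.2 + frob u.2 v.2.

Definition Hop {m d n : nat} (A W : 'M[R]_(m, d)) (theta : 'M[R]_(d, n))
  (beta : 'M[R]_(m, n)) (u : triple m d n) : triple m d n :=
  (Dop A W theta beta u.1.1, hada beta u.1.2, hada (erecip beta) u.2).

Definition Hsqnorm {m d n : nat} (A W : 'M[R]_(m, d)) (theta : 'M[R]_(d, n))
  (beta : 'M[R]_(m, n)) (u : triple m d n) : R :=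
  trip_inner u (Hop A W theta beta u).

Definition Omega_star {m d n : nat} (A : 'M[R]_(m, d)) (X : 'M[R]_(m, n))
  (f : 'M[R]_(d, n) -> R) (g : 'M[R]_(m, n) -> R) : set (triple m d n) :=
  [set w | exists (Z : 'M[R]_(d, n)) (E lam : 'M[R]_(m, n)),
     [/\ w = mk_triple Z E lam,
         (exists2 G, subdiff f Z G & G + A^T *m lam = 0),
         (exists2 G, subdiff g E G & G + lam = 0) &
         A *m Z + E = X]].

(* dist^2_H(omega, Omega_star) = min over omega_star in Omega_star (taken as inf) *)
Definition dist2H {m d n : nat} (A W : 'M[R]_(m, d)) (theta : 'M[R]_(d, n))
  (beta : 'M[R]_(m, n)) (Om : set (triple m d n)) (w : triple m d n) : R :=
  inf [set Hsqnorm A W theta beta (trip_sub w ws) | ws in Om].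

Definition is_argmin {T : Type} (F : T -> R) (x : T) : Prop :=
  forall y, F x <= F y.

Definition dladmm_seq {m d n : nat} (A : 'M[R]_(m, d)) (X : 'M[R]_(m, n))
  (f : 'M[R]_(d, n) -> R) (g : 'M[R]_(m, n) -> R)
  (W : nat -> 'M[R]_(m, d)) (theta : nat -> 'M[R]_(d, n))
  (beta : nat -> 'M[R]_(m, n))
  (Z : nat -> 'M[R]_(d, n)) (E lam : nat -> 'M[R]_(m, n)) : Prop :=
  forall k : nat,
  [/\ is_argmin (fun Z' => f Z' + wsqnorm (theta k)
         (Z' - Z k + hada (erecip (theta k))
            ((W k)^T *m (lam k + hada (beta k) (A *m Z k + E k - X)))))
        (Z k.+1),
      is_argmin (fun E' => g E' + wsqnorm (beta k)
         (E' - X + A *m Z k.+1 + hada (erecip (beta k)) (lam k)))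
        (E k.+1) &
      lam k.+1 = lam k + hada (beta k) (A *m Z k.+1 + E k.+1 - X)].

End DLADMM.

(* Main.v *)
Require Import Defs.
From HB Require Import structures.
From mathcomp Require Import all_boot all_order all_algebra.
From mathcomp Require Import classical_sets reals.
From mathcomp Require Import ring lra.
Import Order.TTheory GRing.Theory Num.Theory.
Local Open Scope ring_scope.
Local Open Scope classical_set_scope.

Set Implicit Arguments. Unset Strict Implicit.

Section Aux.
Variable R : realType.

Lemma frobC {p q} (M N : 'M[R]_(p,q)) : frob M N = frob N M.
Proof. rewrite /frob; apply: eq_bigr => i _; apply: eq_bigr => j _; exact: mulrC. Qed.

Lemma frobDl {p q} (M N P : 'M[R]_(p,q)) : frob (M + N) P = frob M P + frob N P.
Proof.
rewrite /frob -big_split; apply: eq_bigr => i _ /=; rewrite -big_split.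
by apply: eq_bigr => j _; rewrite mxE mulrDl.
Qed.

Lemma frobNl {p q} (M P : 'M[R]_(p,q)) : frob (- M) P = - frob M P.
Proof.
rewrite /frob -sumrN; apply: eq_bigr => i _ /=; rewrite -sumrN.
by apply: eq_bigr => j _; rewrite mxE mulNr.
Qed.

Lemma frobZl {p q} a (M P : 'M[R]_(p,q)) : frob (a *: M) P = a * frob M P.
Proof.
rewrite /frob mulr_sumr; apply: eq_bigr => i _ /=; rewrite mulr_sumr.
by apply: eq_bigr => j _; rewrite mxE mulrA.
Qed.

Lemma frobBl {p q} (M N P : 'M[R]_(p,q)) : frob (M - N) P = frob M P - frob N P.
Proof. by rewrite frobDl frobNl. Qed.
Lemma frobDr {p q} (M N P : 'M[R]_(p,q)) : frob P (M + N) = frob P M + frob P N.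
Proof. by rewrite frobC frobDl !(frobC P). Qed.
Lemma frobNr {p q} (M P : 'M[R]_(p,q)) : frob P (- M) = - frob P M.
Proof. by rewrite frobC frobNl frobC. Qed.
Lemma frobBr {p q} (M N P : 'M[R]_(p,q)) : frob P (M - N) = frob P M - frob P N.
Proof. by rewrite frobDr frobNr. Qed.
Lemma frobZr {p q} a (M P : 'M[R]_(p,q)) : frob P (a *: M) = a * frob P M.
Proof. by rewrite frobC frobZl frobC. Qed.

Lemma frob_tr {m d n} (A : 'M[R]_(m,d)) (M : 'M[R]_(m,n)) (N : 'M[R]_(d,n)) :
  frob (A^T *m M) N = frob M (A *m N).
Proof.
rewrite /frob.
transitivity (\sum_(i < d) \sum_(j < n) \sum_(k < m) A k i * M k j * N i j).
  apply: eq_bigr => i _; apply: eq_bigr => j _; rewrite mxE mulr_suml.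
  by apply: eq_bigr => k _; rewrite mxE.
transitivity (\sum_(k < m) \sum_(j < n) \sum_(i < d) A k i * M k j * N i j).
  under eq_bigr => i _ do rewrite exchange_big /=.
  rewrite exchange_big /=; apply: eq_bigr => k _; exact: exchange_big.
apply: eq_bigr => k _; apply: eq_bigr => j _; rewrite mxE mulr_sumr.
by apply: eq_bigr => i _; ring.
Qed.

Lemma frob_ge0 {p q} (M : 'M[R]_(p,q)) : 0 <= frob M M.
Proof. by apply: sumr_ge0 => i _; apply: sumr_ge0 => j _; rewrite -expr2 sqr_ge0. Qed.

Lemma frob_gt0 {p q} (M : 'M[R]_(p,q)) : M != 0 -> 0 < frob M M.
Proof.
move=> /eqP nz; rewrite lt_def frob_ge0 andbT; apply/eqP => h; apply: nz.
have h1 := psumr_eq0P (fun i _ => sumr_ge0 _ (fun j _ => sqr_ge0 (M i j))) h.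
apply/matrixP => i j; rewrite mxE.
have h2 := @psumr_eq0P R _ xpredT (fun j => M i j ^+ 2) (fun j _ => sqr_ge0 (M i j)) (h1 i isT) j isT.
by apply/eqP; rewrite -sqrf_eq0 h2.
Qed.

Lemma sum_sq_lin (k : nat) (x y : R) (a b : 'I_k -> R) :
  \sum_i (x * a i - y * b i) ^+ 2 =
  x^+2 * \sum_i a i ^+ 2 - 2 * x * y * \sum_i a i * b i + y ^+ 2 * \sum_i b i ^+ 2.
Proof.
rewrite !mulr_sumr -sumrB -big_split /=; apply: eq_bigr => i _; ring.
Qed.

Lemma CS (k : nat) (a b : 'I_k -> R) :
  (\sum_i a i * b i) ^+ 2 <= (\sum_i a i ^+ 2) * (\sum_i b i ^+ 2).
Proof.
set Sa := \sum_i a i ^+ 2; set Sb := \sum_i b i ^+ 2; set Sab := \sum_i a i * b i.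
have Sa0 : 0 <= Sa by apply: sumr_ge0 => i _; exact: sqr_ge0.
have Sb0 : 0 <= Sb by apply: sumr_ge0 => i _; exact: sqr_ge0.
have [Sae|Sapos] := eqVneq Sa 0.
  have h := @psumr_eq0P R _ xpredT (fun i => a i ^+ 2) (fun i _ => sqr_ge0 (a i)) Sae.
  have -> : Sab = 0.
    rewrite /Sab big1 // => i _.
    by have /eqP := h i isT; rewrite sqrf_eq0 => /eqP ->; rewrite mul0r.
  by rewrite Sae expr2 !mul0r.
have Sagt : 0 < Sa by rewrite lt_def Sapos Sa0.
have := sum_sq_lin Sab Sa a b.
have : 0 <= \sum_i (Sab * a i - Sa * b i) ^+ 2 by apply: sumr_ge0 => i _; exact: sqr_ge0.
rewrite -/Sa -/Sb -/Sab => H1 H2; rewrite H2 in H1.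
nra.
Qed.

Lemma frob_AZ {m d n} (A : 'M[R]_(m,d)) (Z : 'M[R]_(d,n)) :
  frob (A *m Z) (A *m Z) <= frob A A * frob Z Z.
Proof.
rewrite /frob.
apply: (@le_trans _ _ (\sum_(i < m) \sum_(j < n) ((\sum_k A i k ^+ 2) * (\sum_k Z k j ^+ 2)))).
  apply: ler_sum => i _; apply: ler_sum => j _; rewrite mxE -expr2.
  exact: (CS (fun k => A i k) (fun k => Z k j)).
rewrite mulr_suml; apply: ler_sum => i _.
rewrite [X in _ <= _ * X]exchange_big /= mulr_sumr; apply: ler_sum => j _.
rewrite le_eqVlt; apply/orP; left; apply/eqP; congr (_ * _); apply: eq_bigr => k _; by rewrite expr2.
Qed.


Lemma hada1 {p q} (M : 'M[R]_(p,q)) : hada (const_mx 1) M = M.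
Proof. by apply/matrixP => i j; rewrite !mxE mul1r. Qed.

Lemma hadaC {p q} t (M : 'M[R]_(p,q)) : hada (const_mx t) M = t *: M.
Proof. by apply/matrixP => i j; rewrite !mxE. Qed.

Lemma erecipC {p q} t : erecip (const_mx t : 'M[R]_(p,q)) = const_mx t^-1.
Proof. by apply/matrixP => i j; rewrite !mxE. Qed.

Lemma wsqC {p q} w (M : 'M[R]_(p,q)) : wsqnorm (const_mx w) M = 2^-1 * w * frob M M.
Proof.
rewrite /wsqnorm /frob -mulrA; congr (_ * _); rewrite mulr_sumr; apply: eq_bigr => i _.
rewrite mulr_sumr; apply: eq_bigr => j _; by rewrite mxE expr2.
Qed.

Lemma specnorm0 {p q} : specnorm (0 : 'M[R]_(p,q)) = 0.
Proof.
rewrite /specnorm.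
set S := [set _ | _ in _].
have h : forall y, S y -> y = 0.
  move=> y [x _ <-]; rewrite mul0mx /vnorm /frob big1 ?sqrtr0 // => i _.
  by rewrite big1 // => j _; rewrite mxE mul0r.
have [ne|e] := boolp.pselect (S !=set0).
  have -> : S = [set 0].
    apply/seteqP; split => y; first by move/h.
    move=> ->; case: ne => y' Sy'; by rewrite -(h y' Sy').
  exact: sup1.
by move/nonemptyPn: e => ->; exact: sup0.
Qed.

Lemma frob_sq_add {p q} (V D : 'M[R]_(p,q)) s :
  frob (V + s *: D) (V + s *: D) = frob V V + 2 * s * frob V D + s ^+ 2 * frob D D.
Proof. rewrite !(frobDl, frobDr, frobZl, frobZr) (frobC D V); ring. Qed.

Lemma argmin_subgrad {p q} (F : 'M[R]_(p,q) -> R) (w : R) (Y Z : 'M[R]_(p,q)) :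
  convex_fun F -> 0 < w ->
  is_argmin (fun Z' => F Z' + wsqnorm (const_mx w) (Z' - Y)) Z ->
  subdiff F Z (w *: (Y - Z)).
Proof.
move=> cF w0 hmin Z'.
set D := Z' - Z.
set a := F Z' - F Z - frob (w *: (Y - Z)) D.
set b := 2^-1 * w * frob D D.
have b0 : 0 <= b by rewrite /b; have := frob_ge0 D; nra.
have key : forall s, 0 < s -> s <= 1 -> 0 <= a + s * b.
  move=> s s0 s1.
  have h1 := hmin (s *: Z' + (1 - s) *: Z).
  have h2 := cF Z' Z s (ltW s0) s1.
  have e : s *: Z' + (1 - s) *: Z - Y = (Z - Y) + s *: D.
    by apply/matrixP => i j; rewrite /D !mxE; ring.
  rewrite /= e !wsqC frob_sq_add in h1.
  have e2 : frob (w *: (Y - Z)) D = - (w * frob (Z - Y) D).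
    by rewrite frobZl -opprB frobNl mulrN.
  have : 0 <= s * (a + s * b).
    rewrite /a /b e2; nra.
  by rewrite pmulr_rge0.
have a0 : 0 <= a.
  rewrite leNgt; apply/negP => a0.
  have ba : 0 < b - a by lra.
  set s := - a / (b - a).
  have hs : s * (b - a) = - a by rewrite /s divfK // gt_eqF.
  have s0 : 0 < s by rewrite /s divr_gt0 // oppr_gt0.
  have s1 : s <= 1 by rewrite /s ler_pdivrMr // mul1r; lra.
  have := key s s0 s1.
  have : (a + s * b) * (b - a) = - (a * a) by nra.
  nra.
rewrite /a in a0; lra.
Qed.

Lemma subgrad_mono {p q} (F : 'M[R]_(p,q) -> R) Z1 Z2 G1 G2 :
  subdiff F Z1 G1 -> subdiff F Z2 G2 -> 0 <= frob (G1 - G2) (Z1 - Z2).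
Proof.
move=> h1 h2; have := h1 Z2; have := h2 Z1.
rewrite frobBl -(opprB Z1 Z2) !frobNr; lra.
Qed.

End Aux.

Lemma fejer (R : realType) m d n (t : R) (A : 'M[R]_(m,d)) (Zk Zp Zs : 'M[R]_(d,n))
  (Ek Ep Es lk ls : 'M[R]_(m,n)) :
  (forall Z : 'M[R]_(d,n), 0 <= t * frob Z Z - frob (A *m Z) (A *m Z)) ->
  let X := A *m Zs + Es in
  let lp := lk + (A *m Zp + Ep - X) in
  0 <= frob ((t *: (Zk - Zp) - A^T *m (lk + (A *m Zk + Ek - X))) - (- (A^T *m ls))) (Zp - Zs) ->
  0 <= frob (- lp - (- ls)) (Ep - Es) ->
  0 <= frob (- lp - (- lk)) (Ep - Ek) ->
  t * frob (Zp - Zs) (Zp - Zs) - frob (A *m (Zp - Zs)) (A *m (Zp - Zs))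
   + frob (Ep - Es) (Ep - Es) + frob (lp - ls) (lp - ls)
  <= t * frob (Zk - Zs) (Zk - Zs) - frob (A *m (Zk - Zs)) (A *m (Zk - Zs))
   + frob (Ek - Es) (Ek - Es) + frob (lk - ls) (lk - ls).
Proof.
move=> psd X lp h1 h2 h3.
have h4 := psd (Zp - Zk).
have h5 : 0 <= frob ((Ep - Ek)) (Ep - Ek) + frob (lp - lk) (lp - lk).
  by have := frob_ge0 (Ep - Ek); have := frob_ge0 (lp - lk); lra.
move: h1 h2 h3 h4 h5; rewrite /lp /X.
rewrite !(frobDl, frobDr, frobNl, frobNr, frobZl, frobZr, frob_tr, mulmxDr, mulmxN, mulmxBr).
set aZk := A *m Zk; set aZp := A *m Zp; set aZs := A *m Zs.
have c1 := frobC aZk aZp; have c2 := frobC aZk aZs; have c3 := frobC aZp aZs.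
have c4 := frobC aZk Ek; have c5 := frobC aZk Ep; have c6 := frobC aZk Es.
have c7 := frobC aZk lk; have c8 := frobC aZk ls.
have c9 := frobC aZp Ek; have c10 := frobC aZp Ep; have c11 := frobC aZp Es.
have c12 := frobC aZp lk; have c13 := frobC aZp ls.
have c14 := frobC aZs Ek; have c15 := frobC aZs Ep; have c16 := frobC aZs Es.
have c17 := frobC aZs lk; have c18 := frobC aZs ls.
have c19 := frobC Ek Ep; have c20 := frobC Ek Es; have c21 := frobC Ek lk; have c22 := frobC Ek ls.
have c23 := frobC Ep Es; have c24 := frobC Ep lk; have c25 := frobC Ep ls.
have c26 := frobC Es lk; have c27 := frobC Es ls; have c28 := frobC lk ls.
have d1 := frobC Zk Zp; have d2 := frobC Zk Zs; have d3 := frobC Zp Zs.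
have e1 : t * frob Zk Zp = t * frob Zp Zk by rewrite d1.
have e2 : t * frob Zk Zs = t * frob Zs Zk by rewrite d2.
have e3 : t * frob Zp Zs = t * frob Zs Zp by rewrite d3.
lra.
Qed.

Lemma id1 (R : realType) p q (y Zk M : 'M[R]_(p,q)) s : y - Zk + s *: M = y - (Zk - s *: M).
Proof. by apply/matrixP => i j; rewrite !mxE; ring. Qed.
Lemma id2 (R : realType) p q (y X AZ l : 'M[R]_(p,q)) : y - X + AZ + l = y - (X - AZ - l).
Proof. by apply/matrixP => i j; rewrite !mxE; ring. Qed.
Lemma id3 (R : realType) p q (t : R) (Zk M Zp : 'M[R]_(p,q)) : t != 0 ->
  t *: (Zk - t^-1 *: M - Zp) = t *: (Zk - Zp) - M.
Proof. move=> t0; apply/matrixP => i j; rewrite !mxE; field; exact: t0. Qed.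
Lemma id4 (R : realType) p q (X AZ l Ep : 'M[R]_(p,q)) :
  1 *: (X - AZ - l - Ep) = - (l + (AZ + Ep - X)).
Proof. by apply/matrixP => i j; rewrite !mxE; ring. Qed.
Lemma id5 (R : realType) p q (a b : 'M[R]_(p,q)) :
  frob (- a - - b) (- a - - b) = frob (a - b) (a - b).
Proof. by rewrite -opprD frobNl frobNr opprK. Qed.

Lemma HsqE (R : realType) m d n (A : 'M[R]_(m,d)) t (u : triple R m d n) :
  Hsqnorm A A (const_mx t) (const_mx 1) u =
  t * frob u.1.1 u.1.1 - frob (A *m u.1.1) (A *m u.1.1) + frob u.1.2 u.1.2 + frob u.2 u.2.
Proof.
rewrite /Hsqnorm /trip_inner /Hop /Dop hadaC hada1 erecipC invr1 !hada1.
by rewrite frobBr frobZr (frobC u.1.1 (A^T *m _)) frob_tr.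
Qed.

Theorem theorem2 (R : realType) (m d n : nat) (A : 'M[R]_(m, d))
  (X : 'M[R]_(m, n)) (f : 'M[R]_(d, n) -> R) (g : 'M[R]_(m, n) -> R)
  (c : R) :
  convex_fun f -> convex_fun g ->
  (forall sigma : R, 0 <= sigma -> sigma <= c ->
     exists W theta beta, @Sset R m d n sigma A W theta beta) ->
  Omega_star A X f g !=set0 ->
  forall sigma : R, 0 <= sigma -> sigma <= c ->
  forall (Z0 : 'M[R]_(d, n)) (E0 lam0 : 'M[R]_(m, n)),
  exists (W : nat -> 'M[R]_(m, d)) (theta : nat -> 'M[R]_(d, n))
         (beta : nat -> 'M[R]_(m, n)),
    (forall k, Sset sigma A (W k) (theta k) (beta k)) /\
    forall (Z : nat -> 'M[R]_(d, n)) (E lam : nat -> 'M[R]_(m, n)),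
      Z 0%N = Z0 -> E 0%N = E0 -> lam 0%N = lam0 ->
      dladmm_seq A X f g W theta beta Z E lam ->
      exists K : nat, forall k : nat, (K <= k)%N ->
        dist2H A (W k.+1) (theta k.+1) (beta k.+1) (Omega_star A X f g)
               (mk_triple (Z k.+1) (E k.+1) (lam k.+1))
        <= dist2H A (W k) (theta k) (beta k) (Omega_star A X f g)
               (mk_triple (Z k) (E k) (lam k)).
Proof.
move=> cf cg _ [ws0 Om0] sigma s0 sc Z0 E0 lam0.
set t := 1 + frob A A.
have t0 : 0 < t by rewrite /t; have := frob_ge0 A; lra.
have psd : forall Z : 'M[R]_(d,n), 0 <= t * frob Z Z - frob (A *m Z) (A *m Z).
  move=> Z; have := frob_AZ A Z; have := frob_ge0 Z; rewrite /t mulrDl mul1r; lra.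
exists (fun=> A), (fun=> const_mx t), (fun=> const_mx 1); split.
  move=> k; split.
  - by rewrite subrr specnorm0.
  - by move=> i j; rewrite mxE.
  - by move=> i j; rewrite mxE.
  - move=> Z nz; rewrite /Dop hadaC hada1 frobBl frobZl frob_tr.
    have := frob_gt0 nz; have := frob_AZ A Z; rewrite /t mulrDl mul1r; lra.
move=> Z E lam _ _ _ hseq.
have step : forall j,
  [/\ subdiff f (Z j.+1) (t *: (Z j - Z j.+1) - A^T *m (lam j + (A *m Z j + E j - X))),
      subdiff g (E j.+1) (- lam j.+1) &
      lam j.+1 = lam j + (A *m Z j.+1 + E j.+1 - X)].
  move=> j; case: (hseq j) => hz he hl; rewrite hada1 in hl.
  split => //.
  - rewrite -id3 ?gt_eqF //; apply: argmin_subgrad cf t0 _ => y.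
    have := hz y; rewrite /= hada1 erecipC hadaC !id1; exact.
  - rewrite hl -id4; apply: argmin_subgrad cg ltr01 _ => y.
    have := he y; rewrite /= erecipC invr1 hada1 !id2; exact.
exists 1%N => k; case: k => [//|k] _.
rewrite /dist2H.
have lb : forall w : triple R m d n,
    has_lbound [set Hsqnorm A A (const_mx t) (const_mx 1) (trip_sub w ws) | ws in Omega_star A X f g].
  move=> w; exists 0 => y [ws _ <-]; rewrite HsqE.
  have := psd (trip_sub w ws).1.1; have := frob_ge0 (trip_sub w ws).1.2;
  have := frob_ge0 (trip_sub w ws).2; lra.
apply: lb_le_inf; first by exists (Hsqnorm A A (const_mx t) (const_mx 1)
   (trip_sub (mk_triple (Z k.+1) (E k.+1) (lam k.+1)) ws0)); exists ws0.
move=> y [ws Oms <-].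
apply: le_trans (ge_inf (lb _) _) _; first by exists ws.
case: Oms => Zs [Es [ls [-> [Gs hGs eGs] [Gs' hGs' eGs'] eX]]].
rewrite !HsqE /trip_sub /mk_triple /= !id5.
case: (step k.+1) => hf hgp hl.
case: (step k) => _ hgk _.
have eGs2 : Gs = - (A^T *m ls) by apply/eqP; rewrite -addr_eq0; apply/eqP.
have eGs2' : Gs' = - ls by apply/eqP; rewrite -addr_eq0; apply/eqP.
have h1 := subgrad_mono hf hGs.
have h2 := subgrad_mono hgp hGs'.
have h3 := subgrad_mono hgp hgk.
rewrite eGs2 in h1; rewrite eGs2' in h2.
rewrite hl in h2 h3 *.
rewrite -eX in h1 h2 h3 *.
exact: (@fejer R m d n t A _ _ _ _ _ _ _ _ psd h1 h2 h3).
Qed.
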